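(* Let $L\subseteq\bigwedge^{k}V$ be a subspace such that $e_{1}\wedge e_{2}\wedge x=0$ for all $x\in L$. Then for every $3\leq i<j\leq n$, also $e_{1}\wedge e_{2}\wedge y=0$ for all $y\in N_{j\to i}L$.
   Context: $\mathbb{F}$ is a field (assumed throughout the paper, for expository purposes, to have characteristic not $2$), $V$ is an $n$-dimensional $\mathbb{F}$-vector space with a fixed basis $e_1,\dots,e_n$, and $\bigwedge V$ its exterior algebra. For $j\in[n]$, $V^{(j)}$ is the span of $\{e_h:h\neq j\}$. Slow shift: for distinct $i,j\in[n]$ and nonzero $m\in\bigwedge^kV$, write uniquely $m=x+e_j\wedge y$ with $x\in\bigwedge^kV^{(j)}$, $y\in\bigwedge^{k-1}V^{(j)}$, and set $N_{j\to i}m=x+e_i\wedge y$ if this is nonzero, and $N_{j\to i}m=e_j\wedge y$ otherwise (the limit as $t\to0$ of the projective action of the linear map $e_j\mapsto e_i+te_j$ fixing the other $e_h$). For a subspace $L$ of $\bigwedge^kV$, $N_{j\to i}L$ is the span of $\{N_{j\to i}m:m\in L\setminus\{0\}\}$. *)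

(* Defs.v *)
(* Exterior algebra of V = F^n with basis e_0,...,e_(n-1)
   (paper's e_1,...,e_n), built concretely: an element of /\V is its
   coordinate function on the standard basis e_S (S a subset of 'I_n,
   e_S = wedge of e_s, s in S, in increasing order). *)
From HB Require Import structures.
From mathcomp Require Import all_boot all_order all_algebra.
Set Implicit Arguments. Unset Strict Implicit. Unset Printing Implicit Defensive.
Import Order.TTheory GRing.Theory.
Local Open Scope ring_scope.

Section Ext.
Variables (F : fieldType) (n : nat).

Definition ext := {ffun {set 'I_n} -> F^o}.

(* sign of e_A /\ e_B = sign * e_(A u B) for disjoint A, B:
   (-1)^(number of inversions (a,b), a in A, b in B, b < a) *)
Definition ext_sign (A B : {set 'I_n}) : F :=
  (-1) ^+ #|[set p : 'I_n * 'I_n | [&& p.1 \in A, p.2 \in B & (p.2 < p.1)%N]]|.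

Definition eS (S : {set 'I_n}) : ext := [ffun T : {set 'I_n} => if T == S then 1 else 0].

Definition evec (i : 'I_n) : ext := eS [set i].

Definition blade (A B : {set 'I_n}) : ext :=
  if [disjoint A & B] then ext_sign A B *: eS (A :|: B) else 0.

Definition wedge (x y : ext) : ext :=
  \sum_(A : {set 'I_n}) \sum_(B : {set 'I_n}) (x A * y B) *: blade A B.

Definition homog (k : nat) (m : ext) : Prop :=
  forall S : {set 'I_n}, #|S| != k -> m S = 0.

(* The unique decomposition m = x + e_j /\ y with x, y in /\ V^(j):
   x = part of m on basis elements not involving e_j;
   y = coefficients with e_j /\ e_S = ext_sign [set j] S e_(j u S),
   i.e. y_S = ext_sign [set j] S * m_(j u S) for j notin S
   (ext_sign is +-1, hence its own inverse). *)
Definition split_x (j : 'I_n) (m : ext) : ext :=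
  [ffun S : {set 'I_n} => if j \in S then 0 else m S].
Definition split_y (j : 'I_n) (m : ext) : ext :=
  [ffun S : {set 'I_n} => if j \in S then 0 else ext_sign [set j] S * m (j |: S)].

Definition slow_shift (j i : 'I_n) (m : ext) : ext :=
  let v := split_x j m + wedge (evec i) (split_y j m) in
  if v != 0 then v else wedge (evec j) (split_y j m).

Definition in_slow_shift_span (j i : 'I_n) (L : {vspace ext}) (y : ext) : Prop :=
  exists s : seq ext, all (fun m => (m \in L) && (m != 0)) s /\
                      y \in <<map (slow_shift j i) s>>%VS.

End Ext.

Arguments ext_sign {F n}.
Arguments eS {F n}.
Arguments evec {F n}.
Arguments blade {F n}.
Arguments wedge {F n}.
Arguments homog {F n}.
Arguments split_x {F n}.
Arguments split_y {F n}.
Arguments slow_shift {F n}.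
Arguments in_slow_shift_span {F n}.

(* Main.v *)
Require Import Defs.
From HB Require Import structures.
From mathcomp Require Import all_boot all_order all_algebra.
Set Implicit Arguments. Unset Strict Implicit.
Import GRing.Theory.
Local Open Scope ring_scope.
Section S.
Variables (F : fieldType) (n : nat).
Implicit Types (y z : ext F n).

Lemma scaleE (c : F) (f : ext F n) T : (c *: f) T = c * f T.
Proof. by rewrite ffunE. Qed.

Lemma wedge_eS (A : {set 'I_n}) y : wedge (eS A) y = \sum_B y B *: blade A B.
Proof.
rewrite /wedge (bigD1 A) //= [X in _ + X]big1 ?addr0.
  by apply: eq_bigr => B _; rewrite ffunE eqxx mul1r.
by move=> A' /negbTE hA; apply: big1 => B _; rewrite ffunE hA mul0r scale0r.
Qed.

Lemma blade_val (A B T : {set 'I_n}) : blade A B T =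
  (if [disjoint A & B] && (T == A :|: B) then ext_sign A B else 0 : F).
Proof.
rewrite /blade; case: ifP => _ /=; last by rewrite ffunE.
by rewrite scaleE ffunE; case: eqP; rewrite ?mulr1 ?mulr0.
Qed.

Lemma sign_neq0 (A B : {set 'I_n}) : ext_sign A B != 0 :> F.
Proof. by rewrite /ext_sign signr_eq0. Qed.

Definition P (a b : 'I_n) y := forall B : {set 'I_n}, a \notin B -> b \notin B -> y B = 0.
Definition Q (a : 'I_n) z := forall C : {set 'I_n}, a \notin C -> z C = 0.

Lemma wedge_P a b c y : c != a -> c != b -> P a b y -> P a b (wedge (evec c) y).
Proof.
move=> ca cb hy T aT bT; rewrite /evec wedge_eS sum_ffunE big1 // => B _.
rewrite scaleE blade_val; case: andP => [[_ /eqP eT]|]; last by rewrite mulr0.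
rewrite hy ?mul0r //; [apply: contra aT|apply: contra bT] => h; by rewrite eT in_setU h orbT.
Qed.

Lemma P_Q a b y : P a b y -> Q a (wedge (evec b) y).
Proof.
move=> hy C aC; rewrite /evec wedge_eS sum_ffunE big1 // => B _.
rewrite scaleE blade_val; case: andP => [[hd /eqP eT]|]; last by rewrite mulr0.
rewrite hy ?mul0r //.
  by apply: contra aC => h; rewrite eT in_setU h orbT.
by rewrite -disjoints1.
Qed.

Lemma Q_0 a z : Q a z -> wedge (evec a) z = 0.
Proof.
move=> hz; apply/ffunP => T; rewrite /evec wedge_eS sum_ffunE ffunE big1 // => C _.
rewrite scaleE blade_val; case: (boolP (a \in C)) => aC.
  by rewrite disjoints1 aC /= mulr0.
by rewrite hz // mul0r.
Qed.

Lemma sum_blade1 c (B0 : {set 'I_n}) (f : {set 'I_n} -> F) : c \notin B0 ->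
  \sum_B f B * blade [set c] B (c |: B0) = f B0 * ext_sign [set c] B0.
Proof.
move=> cB0; rewrite (bigD1 B0) //= big1 ?addr0.
  by rewrite blade_val disjoints1 cB0 eqxx.
move=> B hB; rewrite blade_val; case: andP => [[hd /eqP eT]|]; last by rewrite mulr0.
move: hd; rewrite disjoints1 => cB.
by case/eqP: hB; rewrite -(setU1K cB) -(setU1K cB0) eT.
Qed.

Lemma D_P a b y : a != b -> wedge (evec a) (wedge (evec b) y) = 0 -> P a b y.
Proof.
move=> ab hD B aB bB.
have aT : a \notin b |: B by rewrite in_setU1 negb_or ab.
have := congr1 (fun f : ext F n => f (a |: (b |: B))) hD.
rewrite /= ffunE /evec wedge_eS sum_ffunE.
under eq_bigr => C _ do rewrite scaleE.
rewrite sum_blade1 // wedge_eS sum_ffunE.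
under eq_bigr => C _ do rewrite scaleE.
rewrite sum_blade1 // => /eqP.
by rewrite !mulf_eq0 !(negbTE (sign_neq0 _ _)) !orbF => /eqP.
Qed.

Lemma shift_P a b j i m : j != a -> j != b -> i != a -> i != b -> P a b m ->
  P a b (slow_shift j i m).
Proof.
move=> ja jb ia ib hm.
have hy : P a b (split_y j m).
  move=> B aB bB; rewrite ffunE; case: ifP => // _.
  by rewrite hm ?mulr0 // in_setU1 negb_or ?aB ?bB eq_sym ?ja ?jb.
rewrite /slow_shift; case: ifP => _; last exact: wedge_P.
move=> B aB bB; rewrite ffunE (wedge_P ia ib hy) // ffunE addr0.
by case: ifP => // _; apply: hm.
Qed.
End S.

Theorem lemma5p2 (F : fieldType) (n k : nat) (a b : 'I_n)
    (ha : nat_of_ord a = 0%N) (hb : nat_of_ord b = 1%N)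
    (hchar : 2%N \notin [pchar F])
    (L : {vspace ext F n})
    (hL : forall x, x \in L -> homog k x)
    (hL12 : forall x, x \in L -> wedge (evec a) (wedge (evec b) x) = 0)
    (i j : 'I_n) (hi : (2 <= i)%N) (hij : (i < j)%N) :
  forall y : ext F n, in_slow_shift_span j i L y ->
    wedge (evec a) (wedge (evec b) y) = 0.
Proof.
move=> y [s [hs hy]].
have ab : a != b by rewrite -val_eqE /= ha hb.
have ia : i != a by rewrite -val_eqE /= ha; apply/eqP => e; rewrite e in hi.
have ib : i != b by rewrite -val_eqE /= hb; apply/eqP => e; rewrite e in hi.
have ja : j != a by rewrite -val_eqE /= ha; apply/eqP => e; rewrite e in hij.
have jb : j != b by rewrite -val_eqE /= hb; apply/eqP => e; rewrite e in hij hi;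
  move: (leq_trans hi hij).
have hPs : forall m, m \in s -> P a b (slow_shift j i m).
  move=> m /(allP hs) /andP [mL _].
  by apply: shift_P => //; apply: D_P => //; apply: hL12.
apply: Q_0; apply: P_Q => B aB bB.
have := coord_span (X := in_tuple (map (slow_shift j i) s)) hy.
move=> ->; rewrite sum_ffunE big1 // => t _; rewrite scaleE.
have : (map (slow_shift j i) s)`_t \in map (slow_shift j i) s.
  by apply: mem_nth; rewrite ltn_ord.
case/mapP => m ms ->; by rewrite hPs ?mulr0.
Qed.
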